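(* Let a classification model have feature space $\Phi=[-a,a]^n$ ($a>0$) and $n$ classes, with logits $z=Wx+b$ for $x\in\Phi$, $W\in\mathbb{R}^{n\times n}$, $b\in\mathbb{R}^n$, and $\rho(W)=\min_{i\ne j}\|W[j]-W[i]\|_2>0$. Let $\tau\in(0,1)$ and $\delta=\frac{1}{\rho(W)}\log\big(\frac{\tau(1-n)}{\tau-1}\big)$. For $i\ne j$ let $$\Delta^{(i,j)\pm\delta}_\phi=\Big\{x\in\Phi:\ \frac{|(W[i]-W[j])x+b[i]-b[j]|}{\|W[i]-W[j]\|_2}\le\delta\Big\},\qquad \Gamma\Delta=\bigcup_{i=1}^{n-1}\bigcup_{j=i+1}^n\Delta^{(i,j)\pm\delta}_\phi.$$ Then the fraction of $\Phi$ classified with softmax score at least $\tau$ satisfies $$\mathcal{R}(\Phi(\ge\tau))\ \ge\ 1-\frac{1}{(2a)^n}\mathrm{vol}(\Gamma\Delta),$$ where $\Phi(\ge\tau)=\{x\in\Phi:\max\mathrm{softmax}(Wx+b)\ge\tau\}$, $\mathcal{R}(\Phi(\ge\tau))=\mathrm{vol}(\Phi(\ge\tau))/(2a)^n$, and $\mathrm{vol}$ is $n$-dimensional Lebesgue measure.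
   Context: $W[k]$ denotes the $k$-th row of $W$; $\mathrm{softmax}(z)[k]=e^{z[k]}/\sum_l e^{z[l]}$. *)

(* Defs.v *)
From HB Require Import structures.
From mathcomp Require Import all_boot all_order all_algebra.
From mathcomp Require Import all_classical all_reals all_analysis.
Set Implicit Arguments. Unset Strict Implicit. Unset Printing Implicit Defensive.
Import Order.TTheory GRing.Theory Num.Theory.
Local Open Scope classical_set_scope.
Local Open Scope ring_scope.

Section defs.
Variables (R : realType) (n : nat).

(* points of R^n are row vectors; W[k] is the k-th row of W *)
Definition logits (W : 'M[R]_n) (b : 'rV[R]_n) (x : 'rV[R]_n) (k : 'I_n) : R :=
  \sum_(l < n) W k l * x ord0 l + b ord0 k.

Definition softmax (z : 'I_n -> R) (k : 'I_n) : R :=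
  expR (z k) / \sum_(l < n) expR (z l).

(* max_k softmax(z)[k]  (all entries are > 0, so 0 is a neutral start) *)
Definition max_softmax (z : 'I_n -> R) : R :=
  \big[Num.max/0]_(k < n) softmax z k.

Definition rowdist (W : 'M[R]_n) (i j : 'I_n) : R :=
  Num.sqrt (\sum_(l < n) (W j l - W i l) ^+ 2).

Definition rho (W : 'M[R]_n) : R :=
  inf [set d | exists i j : 'I_n, i != j /\ d = rowdist W i j].

Definition cube (a : R) : set 'rV[R]_n :=
  [set x | forall l : 'I_n, - a <= x ord0 l <= a].

Definition box (lo hi : 'I_n -> R) : set 'rV[R]_n :=
  [set x | forall l : 'I_n, lo l <= x ord0 l <= hi l].
Definition box_vol (lo hi : 'I_n -> R) : R := \prod_(l < n) (hi l - lo l).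

(* n-dimensional Lebesgue (outer) measure: infimum of total volumes of
   countable covers by closed boxes. On Lebesgue measurable sets this is
   the n-dimensional Lebesgue measure. *)
Definition vol (A : set 'rV[R]_n) : \bar R :=
  ereal_inf [set s | exists lo hi : nat -> 'I_n -> R,
     (forall k l, lo k l <= hi k l) /\
     A `<=` \bigcup_k box (lo k) (hi k) /\
     s = (\sum_(0 <= k <oo) (box_vol (lo k) (hi k))%:E)%E].

Definition Phi_ge (W : 'M[R]_n) (b : 'rV[R]_n) (a tau : R) : set 'rV[R]_n :=
  [set x | cube a x /\ tau <= max_softmax (logits W b x)].

Definition Delta (W : 'M[R]_n) (b : 'rV[R]_n) (a delta : R) (i j : 'I_n)
  : set 'rV[R]_n :=
  [set x | cube a x /\
     `|\sum_(l < n) (W i l - W j l) * x ord0 l + (b ord0 i - b ord0 j)|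
       / rowdist W j i <= delta].

Definition GammaDelta (W : 'M[R]_n) (b : 'rV[R]_n) (a delta : R) : set 'rV[R]_n :=
  \bigcup_(i in [set i : 'I_n | true])
    \bigcup_(j in [set j : 'I_n | (i < j)%N]) Delta W b a delta i j.

End defs.

(* Main.v *)
Require Import Defs.
From HB Require Import structures.
From mathcomp Require Import all_boot all_order all_algebra.
From mathcomp Require Import all_classical all_reals all_analysis.
From mathcomp Require Import measurable_realfun.
From mathcomp Require Import ring lra.
Set Implicit Arguments. Unset Strict Implicit. Unset Printing Implicit Defensive.
Import Order.TTheory GRing.Theory Num.Theory.
Local Open Scope classical_set_scope.
Local Open Scope ring_scope.

Section Aux.
Variable R : realType.
Definition nbox n (lo hi : nat -> R) : set (nat -> R) :=
  [set p | forall l, (l < n)%N -> lo l <= p l <= hi l].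
Definition nvol n (lo hi : nat -> R) : R := \prod_(l < n) (hi l - lo l).

Lemma nvol_ge0 n lo hi : (forall l, lo l <= hi l) -> 0 <= nvol n lo hi.
Proof. by move=> h; apply: prodr_ge0 => l _; rewrite subr_ge0. Qed.

Lemma nvolS n lo hi : nvol n.+1 lo hi = nvol n lo hi * (hi n - lo n).
Proof. by rewrite /nvol big_ord_recr. Qed.

Lemma indic_split n (L H : nat -> R) (p : nat -> R) t :
  \1_(nbox n.+1 L H) (fun l => if l == n then t else p l) =
  \1_(`[L n, H n]%classic) t * \1_(nbox n L H) p :> R.
Proof.
have E : nbox n.+1 L H (fun l => if l == n then t else p l) <->
   (`[L n, H n]%classic t /\ nbox n L H p).
  split.
  - move=> h; split.
      by rewrite /= in_itv /=; have := h n (ltnSn n); rewrite eqxx.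
    move=> l ln; have := h l (ltnW ln).
    by rewrite (ltn_eqF ln).
  - rewrite /= in_itv /= => -[ht hp] l; rewrite ltnS leq_eqVlt.
    case/orP => [/eqP ->|ln]; first by rewrite eqxx.
    by rewrite (ltn_eqF ln); apply: hp.
rewrite !indicE.
case: (pselect (`[L n, H n]%classic t)) => ht;
  case: (pselect (nbox n L H p)) => hp.
- by rewrite !mem_set ?mulr1 //; apply/E.
- rewrite (memNset hp) (memNset (A:=nbox n.+1 L H)) ?mulr0 // => /E [].
  by [].
- rewrite (memNset ht) (memNset (A:=nbox n.+1 L H)) ?mul0r // => /E [].
  by [].
- rewrite (memNset ht) (memNset (A:=nbox n.+1 L H)) ?mul0r // => /E [].
  by [].
Qed.

Lemma indic_ge0' (T : Type) (A : set T) x : 0 <= \1_A x :> R.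
Proof. by rewrite indicE ler0n. Qed.

Local Open Scope ereal_scope.

Lemma key n : forall (lo hi c d : nat -> R) (L H L2 H2 : nat -> nat -> R),
  (forall k, (0 <= c k)%R) -> (forall k, (0 <= d k)%R) ->
  (forall l, (lo l <= hi l)%R) -> (forall k l, (L k l <= H k l)%R) ->
  (forall k l, (L2 k l <= H2 k l)%R) ->
  (forall p, nbox n lo hi p ->
     1 <= \sum_(k <oo) (c k * \1_(nbox n (L k) (H k)) p)%:E
          + \sum_(k <oo) (d k * \1_(nbox n (L2 k) (H2 k)) p)%:E) ->
  (nvol n lo hi)%:E <= \sum_(k <oo) (c k * nvol n (L k) (H k))%:E
        + \sum_(k <oo) (d k * nvol n (L2 k) (H2 k))%:E.
Proof.
elim: n => [|n IH] lo hi c d L H L2 H2 c0 d0 lohi LH LH2 hyp.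
  have I1 : forall L H p, \1_(nbox 0 L H) p = 1%R :> R.
    by move=> *; rewrite indicE mem_set.
  have := hyp (fun _ => 0%R) (fun l => fun h => match (notF h) with end).
  rewrite /nvol big_ord0 -/(nvol _ _ _).
  under eq_eseriesr do rewrite I1.
  under [X in _ <= _ + X -> _]eq_eseriesr do rewrite I1.
  have N0 : forall L H, nvol 0 L H = 1%R by move=> *; rewrite /nvol big_ord0.
  move=> h.
  under eq_eseriesr do rewrite big_ord0.
  by under [X in _ <= _ + X]eq_eseriesr do rewrite big_ord0.
pose I k : set (measurableTypeR R) := `[L k n, H k n]%classic.
pose J k : set (measurableTypeR R) := `[L2 k n, H2 k n]%classic.
pose D : set (measurableTypeR R) := `[lo n, hi n]%classic.
pose f k (t : measurableTypeR R) := (c k * nvol n (L k) (H k))%:E * (\1_(I k) t)%:E.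
pose g k (t : measurableTypeR R) := (d k * nvol n (L2 k) (H2 k))%:E * (\1_(J k) t)%:E.
have f0 k t : 0 <= f k t.
  by apply: mule_ge0; rewrite lee_fin ?indic_ge0' // mulr_ge0 ?nvol_ge0.
have g0 k t : 0 <= g k t.
  by apply: mule_ge0; rewrite lee_fin ?indic_ge0' // mulr_ge0 ?nvol_ge0.
have mD : measurable D by exact: measurable_itv.
have mf k : measurable_fun D (f k).
  apply: measurable_funeM; apply/measurable_EFinP.
  by apply: measurable_indic; exact: measurable_itv.
have mg k : measurable_fun D (g k).
  apply: measurable_funeM; apply/measurable_EFinP.
  by apply: measurable_indic; exact: measurable_itv.
have step1 t : D t -> (nvol n lo hi)%:E <= \sum_(k <oo) (f k t + g k t).
  move=> Dt; rewrite nneseriesD //.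
  have fe k : (c k * \1_(I k) t * nvol n (L k) (H k))%:E = f k t.
    by rewrite /f -EFinM mulrAC.
  have ge k : (d k * \1_(J k) t * nvol n (L2 k) (H2 k))%:E = g k t.
    by rewrite /g -EFinM mulrAC.
  have hyp' : forall p, nbox n lo hi p ->
     1 <= \sum_(k <oo) (c k * \1_(I k) t * \1_(nbox n (L k) (H k)) p)%:E
          + \sum_(k <oo) (d k * \1_(J k) t * \1_(nbox n (L2 k) (H2 k)) p)%:E.
    move=> p hp.
    have := hyp (fun l => if l == n then t else p l).
    have E1 k : (c k * \1_(nbox n.+1 (L k) (H k))
          (fun l => if l == n then t else p l))%:E
        = (c k * \1_(I k) t * \1_(nbox n (L k) (H k)) p)%:E.
      by rewrite indic_split mulrA.
    have E2 k : (d k * \1_(nbox n.+1 (L2 k) (H2 k))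
          (fun l => if l == n then t else p l))%:E
        = (d k * \1_(J k) t * \1_(nbox n (L2 k) (H2 k)) p)%:E.
      by rewrite indic_split mulrA.
    have qb : nbox n.+1 lo hi (fun l => if l == n then t else p l).
      move=> l; rewrite ltnS leq_eqVlt => /orP [/eqP ->|ln].
        by rewrite eqxx.
      by rewrite (ltn_eqF ln); apply: hp.
    move=> /(_ qb).
    under eq_eseriesr do rewrite E1.
    by under [X in _ <= _ + X -> _]eq_eseriesr do rewrite E2.
  have := IH lo hi (fun k => c k * \1_(I k) t)%R (fun k => d k * \1_(J k) t)%R
     L H L2 H2 _ _ lohi LH LH2 hyp'.
  have c0' k : (0 <= c k * \1_(I k) t)%R by rewrite mulr_ge0 ?indic_ge0'.
  have d0' k : (0 <= d k * \1_(J k) t)%R by rewrite mulr_ge0 ?indic_ge0'.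
  move=> /(_ c0' d0').
  under eq_eseriesr do rewrite fe.
  by under [X in _ <= _ + X -> _]eq_eseriesr do rewrite ge.
have DE : (hi n - lo n)%:E = lebesgue_measure D.
  rewrite /I /J /= lebesgue_measure_itv /= lte_fin.
  have := lohi n; rewrite le_eqVlt => /orP [/eqP ->|->] //.
  by rewrite ltxx subrr.
rewrite nvolS EFinM DE -integral_cst //.
apply: le_trans (ge0_le_integral _ mD _ _ _ step1) _.
- by move=> t _; rewrite lee_fin nvol_ge0.
- exact: measurable_cst.
- apply: (@ge0_emeasurable_sum _ _ _ _ (fun k t => f k t + g k t) predT).
    by move=> k t _ _; rewrite adde_ge0.
  by move=> k _; apply: emeasurable_funD.
rewrite integral_nneseries //; last first.
  by move=> k t _; rewrite adde_ge0.
  by move=> k; apply: emeasurable_funD.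
rewrite -nneseriesD; last 2 first.
  by move=> k _ _; rewrite lee_fin mulr_ge0 ?nvol_ge0.
  by move=> k _ _; rewrite lee_fin mulr_ge0 ?nvol_ge0.
apply: lee_nneseries.
  by move=> k _ _; apply: integral_ge0 => t _; rewrite adde_ge0.
move=> k _.
rewrite ge0_integralD //.
rewrite /f /g !ge0_integralZl_EFin //;
  try (by move=> t _; rewrite lee_fin indic_ge0');
  try (by apply/measurable_EFinP; apply: measurable_indic; exact: measurable_itv);
  try (by rewrite mulr_ge0 ?nvol_ge0).
rewrite !integral_indic //; try exact: measurable_itv.
rewrite !nvolS !mulrA !(EFinM (_ * _)%R).
apply: leeD; apply: lee_wpmul2l; rewrite ?lee_fin ?mulr_ge0 ?nvol_ge0 //.
- apply: le_trans (measureIl _ _ _) _; try exact: measurable_itv.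
  rewrite /I /J /= lebesgue_measure_itv /= lte_fin.
  by case: ifP => _; rewrite ?lee_fin ?subr_ge0 ?LH.
- apply: le_trans (measureIl _ _ _) _; try exact: measurable_itv.
  rewrite /I /J /= lebesgue_measure_itv /= lte_fin.
  by case: ifP => _; rewrite ?lee_fin ?subr_ge0 ?LH2.
Qed.


Local Close Scope ereal_scope.

Lemma bigmax_ge n (F : 'I_n -> R) k : F k <= \big[Num.max/0]_(i < n) F i.
Proof.
have : k \in index_enum 'I_n by rewrite mem_index_enum.
elim: (index_enum _) => [//|j s IH].
rewrite big_cons inE => /orP [/eqP <-|/IH h].
  by rewrite le_max lexx.
by rewrite le_max h orbT.
Qed.

Lemma exists_argmax m (z : 'I_m.+1 -> R) : exists k, forall l, z l <= z k.
Proof.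
exists [arg max_(i > ord0) z i]%O.
by case: arg_maxP => // i _ h l; apply: h.
Qed.

Definition ext n (f : 'I_n -> R) : nat -> R := fun l => oapp f 0 (insub l).

Lemma extE n (f : 'I_n -> R) (i : 'I_n) : ext f i = f i.
Proof. by rewrite /ext valK. Qed.

Lemma ext_le n (f g : 'I_n -> R) : (forall i, f i <= g i) ->
  forall l, ext f l <= ext g l.
Proof. by move=> h l; rewrite /ext; case: insub => //=. Qed.

Lemma nvol_ext n (lo hi : 'I_n -> R) : nvol n (ext lo) (ext hi) = box_vol lo hi.
Proof. by apply: eq_bigr => i _; rewrite !extE. Qed.

Lemma box_nbox n (lo hi : 'I_n -> R) (p : nat -> R) :
  box lo hi (\row_(l < n) p l) -> nbox n (ext lo) (ext hi) p.
Proof.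
move=> h l hl; have := h (Ordinal hl); rewrite mxE /=.
by rewrite /ext insubT.
Qed.

Local Open Scope ereal_scope.

Definition volset n (A : set 'rV[R]_n) : set (\bar R) :=
  [set s | exists lo hi : nat -> 'I_n -> R,
     (forall k l, (lo k l <= hi k l)%R) /\
     A `<=` \bigcup_k box (lo k) (hi k) /\
     s = (\sum_(0 <= k <oo) (box_vol (lo k) (hi k))%:E)%E].

Lemma volE n (A : set 'rV[R]_n) : vol A = ereal_inf (volset A).
Proof. by []. Qed.

Lemma volset_ge0 n (A : set 'rV[R]_n) s : volset A s -> 0 <= s.
Proof.
move=> [lo [hi [h1 [_ ->]]]]; apply: nneseries_ge0 => k _ _.
by rewrite lee_fin; apply: prodr_ge0 => l _; rewrite subr_ge0.
Qed.

Lemma vol_ge0 n (A : set 'rV[R]_n) : 0 <= vol A.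
Proof. by rewrite volE; apply/ereal_infP => s; apply: volset_ge0. Qed.

Lemma inf_add_ge (S1 S2 : set (\bar R)) (c : R) :
  (forall s, S1 s -> 0 <= s) -> (forall s, S2 s -> 0 <= s) ->
  (forall s1 s2, S1 s1 -> S2 s2 -> c%:E <= s1 + s2) ->
  c%:E <= ereal_inf S1 + ereal_inf S2.
Proof.
move=> g1 g2 H.
have i1 : 0 <= ereal_inf S1 by apply/ereal_infP.
have i2 : 0 <= ereal_inf S2 by apply/ereal_infP.
have h1 : forall s2, S2 s2 -> c%:E - s2 <= ereal_inf S1.
  move=> s2 hs; case: s2 hs => [r| |] hs.
  - by apply/ereal_infP => s1 hs1; rewrite leeBlDr //; exact: H.
  - by rewrite addeNy leNye.
  - by have := g2 _ hs.
case E1: (ereal_inf S1) i1 h1 => [r1| |] i1 h1.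
- rewrite addeC -leeBlDr //; apply/ereal_infP => s2 hs2.
  have := h1 _ hs2; case: s2 hs2 => [r2| |] hs2.
  + by rewrite -!EFinB !lee_fin => h; lra.
  + by rewrite leey.
  + by have := g2 _ hs2.
- by rewrite addye ?leey // gt_eqF // (lt_le_trans _ i2) // ltNy0.
- by [].
Qed.

Lemma term_le_series (u : nat -> \bar R) k : (forall i, 0 <= u i) ->
  u k <= \sum_(i <oo) u i.
Proof.
move=> u0; apply: le_trans (nneseries_lim_ge k.+1 _); last by move=> *.
rewrite big_nat_recr //= -[X in X <= _]add0e; apply: leeD => //.
by apply: sume_ge0.
Qed.

Local Close Scope ereal_scope.

Lemma logitsB n (W : 'M[R]_n) (b x : 'rV[R]_n) i j :
  \sum_(l < n) (W i l - W j l) * x ord0 l + (b ord0 i - b ord0 j) =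
  logits W b x i - logits W b x j.
Proof.
rewrite /logits.
under eq_bigr do rewrite mulrBl.
rewrite sumrB; ring.
Qed.

Lemma rho_le n (W : 'M[R]_n) i j : i != j -> rho W <= rowdist W i j.
Proof.
move=> ij; apply: ge_inf.
  by exists 0 => d [i' [j' [_ ->]]]; exact: sqrtr_ge0.
by exists i, j.
Qed.

Lemma cover_lemma m (a tau : R) (W : 'M[R]_m.+1) (b x : 'rV[R]_m.+1) :
  (0 < m)%N -> 0 < rho W -> 0 < tau < 1 -> cube a x ->
  ~ GammaDelta W b a ((rho W)^-1 * ln (tau * (1 - m.+1%:R) / (tau - 1))) x ->
  tau <= max_softmax (logits W b x).
Proof.
move=> m0 rho0 /andP[t0 t1] cx nG.
set q := tau * (1 - m.+1%:R) / (tau - 1).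
set delta := (rho W)^-1 * ln q.
have mpos : 0 < m%:R :> R by rewrite ltr0n.
have qE : q = tau * m%:R / (1 - tau).
  rewrite /q -addn1 natrD; field.
  by apply/andP; split; apply/negP => /eqP h; lra.
set z := logits W b x.
have [k hk] := exists_argmax z.
have key2 : forall i j, i != j -> ~ Delta W b a delta i j x ->
    0 <= delta -> ln q < `|z i - z j|.
  move=> i j ij nD d0.
  have r0 : rho W <= rowdist W j i by apply: rho_le; rewrite eq_sym.
  have rp : 0 < rowdist W j i by apply: lt_le_trans r0.
  have : delta < `|\sum_(l < m.+1) (W i l - W j l) * x ord0 l
                  + (b ord0 i - b ord0 j)| / rowdist W j i.
    by rewrite ltNge; apply/negP => h; apply: nD; split.
  rewrite logitsB ltr_pdivlMr // => h.
  apply: le_lt_trans h.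
  have -> : ln q = delta * rho W by rewrite /delta mulrAC mulVf ?mul1r // gt_eqF.
  by apply: ler_wpM2l.
have C : forall l, l != k ->
    tau * m%:R * expR (z l) <= (1 - tau) * expR (z k).
  move=> l lk.
  have el := expR_gt0 (z l); have ek := expR_gt0 (z k).
  have elk : expR (z l) <= expR (z k) by rewrite ler_expR.
  case: (lerP (tau * m%:R) (1 - tau)) => hq.
    by nra.
  have q1 : 1 < q by rewrite qE ltr_pdivlMr ?mul1r //; lra.
  have lq := ln_gt0 q1.
  have d0 : 0 <= delta.
    by rewrite /delta; apply: mulr_ge0; [rewrite invr_ge0 ltW | rewrite ltW].
  have hlt : ln q < z k - z l.
    case: (ltngtP k l) => [kl|lk'|e].
    - have nD : ~ Delta W b a delta k l x.
        by move=> hD; apply: nG; exists k => //; exists l.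
      have h := key2 k l (negbT (ltn_eqF kl)) nD d0.
      by rewrite ger0_norm ?subr_ge0 // in h.
    - have nD : ~ Delta W b a delta l k x.
        by move=> hD; apply: nG; exists l => //; exists k.
      have h := key2 l k lk nD d0.
      by rewrite distrC ger0_norm ?subr_ge0 // in h.
    - by move: lk; rewrite (val_inj e) eqxx.
  have : q * expR (z l) < expR (z k).
    rewrite -[q]lnK ?posrE ?(lt_trans ltr01 q1) // -expRD ltr_expR; lra.
  rewrite qE mulrAC ltr_pdivrMr; last by lra.
  by move=> h; apply: ltW; rewrite [(1 - tau) * _]mulrC.
rewrite /max_softmax; apply: le_trans (bigmax_ge _ k).
rewrite /softmax.
have sE : \sum_(l < m.+1) expR (z l) =
    expR (z k) + \sum_(l < m.+1 | l != k) expR (z l) by rewrite (bigD1 k).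
set S := \sum_(l < m.+1 | l != k) expR (z l).
have S0 : 0 <= S by apply: sumr_ge0 => l _; apply: ltW; apply: expR_gt0.
have ek := expR_gt0 (z k).
have Sb : tau * m%:R * S <= m%:R * ((1 - tau) * expR (z k)).
  rewrite /S mulr_sumr.
  apply: le_trans (ler_sum _ (fun l lk => C l lk)) _.
  rewrite (eq_bigl (fun i => i \in predC1 k)) // sumr_const cardC1 card_ord /=.
  by rewrite mulr_natl.
have Sb' : tau * S <= (1 - tau) * expR (z k).
  by move: Sb; rewrite [tau * m%:R]mulrC -mulrA ler_pM2l.
rewrite sE -/S ler_pdivlMr; last by lra.
nra.
Qed.

Lemma prod_const_ord k (c : R) : \prod_(l < k) c = c ^+ k.
Proof.
elim: k => [|k IH]; first by rewrite big_ord0 expr0.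
by rewrite big_ord_recr IH exprSr.
Qed.

End Aux.

Theorem theorem5 (R : realType) (n : nat) (a tau : R) (W : 'M[R]_n) (b : 'rV[R]_n) :
  (2 <= n)%N -> 0 < a -> 0 < rho W -> 0 < tau < 1 ->
  let delta := (rho W)^-1 * ln (tau * (1 - n%:R) / (tau - 1)) in
  (1 - ((2 * a) ^+ n)^-1%:E * vol (GammaDelta W b a delta)
     <= ((2 * a) ^+ n)^-1%:E * vol (Phi_ge W b a tau))%E.
Proof.
case: n W b => [|m] W b hn; first by [].
move=> a0 rho0 ht; cbv zeta.
set delta := (rho W)^-1 * ln (tau * (1 - m.+1%:R) / (tau - 1)).
have m0 : (0 < m)%N by exact: hn.
set P := Phi_ge W b a tau.
set G := GammaDelta W b a delta.
have cover : forall x, cube a x -> P x \/ G x.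
  move=> x cx; case: (pselect (G x)) => hG; [by right|left].
  split => //; exact: cover_lemma m0 rho0 ht cx hG.
have main : (((2 * a) ^+ m.+1)%:E <= vol P + vol G)%E.
  rewrite !volE; apply: inf_add_ge; try exact: volset_ge0.
  move=> s1 s2 [lo1 [hi1 [l1 [c1 ->]]]] [lo2 [hi2 [l2 [c2 ->]]]].
  have hyp : forall pt : nat -> R, nbox m.+1 (fun _ => - a) (fun _ => a) pt ->
     (1 <= \sum_(k <oo) (1 * \1_(nbox m.+1 (ext (lo1 k)) (ext (hi1 k))) pt : R)%:E
          + \sum_(k <oo) (1 * \1_(nbox m.+1 (ext (lo2 k)) (ext (hi2 k))) pt : R)%:E)%E.
    move=> pt hp.
    pose x := \row_(l < m.+1) pt l.
    have cx : cube a x by move=> l; rewrite mxE; exact: hp l (ltn_ord l).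
    have t0 : forall (L H : nat -> R),
        (0 <= (1 * \1_(nbox m.+1 L H) pt : R)%:E)%E.
      by move=> L H; rewrite lee_fin mulr_ge0 ?ler01 ?indic_ge0'.
    case: (cover x cx) => [/c1 [k _ bk] | /c2 [k _ bk]].
    - have hk := box_nbox bk.
      rewrite -[X in (X <= _)%E]adde0; apply: leeD; last first.
        by apply: nneseries_ge0 => *; apply: t0.
      apply: (@le_trans _ _ ((1 * \1_(nbox m.+1 (ext (lo1 k)) (ext (hi1 k))) pt : R)%:E)).
        by rewrite indicE mem_set // mulr1.
      have TT := (@term_le_series _
        (fun i => (1 * \1_(nbox m.+1 (ext (lo1 i)) (ext (hi1 i))) pt : R)%:E) k
        (fun i => t0 (ext (lo1 i)) (ext (hi1 i)))).
      exact TT.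
    - have hk := box_nbox bk.
      rewrite -[X in (X <= _)%E]add0e; apply: leeD.
        by apply: nneseries_ge0 => *; apply: t0.
      apply: (@le_trans _ _ ((1 * \1_(nbox m.+1 (ext (lo2 k)) (ext (hi2 k))) pt : R)%:E)).
        by rewrite indicE mem_set // mulr1.
      exact: (@term_le_series _
        (fun i => (1 * \1_(nbox m.+1 (ext (lo2 i)) (ext (hi2 i))) pt : R)%:E) k
        (fun i => t0 (ext (lo2 i)) (ext (hi2 i)))).
  have la : - a <= a by lra.
  have := @key R m.+1 (fun _ => - a) (fun _ => a) (fun _ => 1) (fun _ => 1)
     (fun k => ext (lo1 k)) (fun k => ext (hi1 k))
     (fun k => ext (lo2 k)) (fun k => ext (hi2 k))
     (fun _ => ler01) (fun _ => ler01) (fun _ => la) (fun k => ext_le (l1 k))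
     (fun k => ext_le (l2 k)) hyp.
  have NV : nvol m.+1 (fun _ => - a) (fun _ => a) = (2 * a) ^+ m.+1.
    by rewrite /nvol prod_const_ord opprK mulr_natl mulr2n.
  rewrite NV.
  under eq_eseriesr do rewrite mul1r nvol_ext.
  under [X in (_ <= _ + X -> _)%E]eq_eseriesr do rewrite mul1r nvol_ext.
  by [].
set c := ((2 * a) ^+ m.+1)^-1.
have apos : 0 < (2 * a) ^+ m.+1 by apply: exprn_gt0; lra.
have h1 : (1 <= c%:E * vol P + c%:E * vol G)%E.
  rewrite -ge0_muleDr ?vol_ge0 //.
  have -> : 1%E = (c%:E * ((2 * a) ^+ m.+1)%:E)%E.
    by rewrite -EFinM mulVf ?gt_eqF.
  by apply: lee_wpmul2l => //; rewrite lee_fin invr_ge0 ltW.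
have vG0 := vol_ge0 G.
case EG: (vol G) vG0 h1 => [r| |] vG0 h1.
- by rewrite -EFinM in h1 *; rewrite leeBlDr.
- rewrite gt0_muley ?lte_fin ?invr_gt0 //.
  by rewrite leNye.
- by [].
Qed.
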